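(* Let $E$ be a finite set and $\tau:2^E\to 2^E$ any map. Then $(E,\tau)$ is uniquely generated if and only if for every $X\subseteq E$, every basis $B$ of $X$, and every $Y\subseteq E$ with $\tau(Y)=\tau(X)$, we have $B\subseteq Y$.
   Context: For $X\subseteq E$, a generator of $X$ is any $B\subseteq E$ with $\tau(B)=\tau(X)$ (not required to be a subset of $X$); a basis of $X$ is an inclusion-minimal generator of $X$. The space $(E,\tau)$ is uniquely generated if every $X\subseteq E$ has exactly one basis. *)

(* Defs.v *)
From mathcomp Require Import all_boot.
Set Implicit Arguments. Unset Strict Implicit. Unset Printing Implicit Defensive.

Definition generator (E : finType) (tau : {set E} -> {set E}) (X B : {set E}) : Prop :=
  tau B = tau X.

Definition basis (E : finType) (tau : {set E} -> {set E}) (X B : {set E}) : Prop :=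
  generator tau X B /\ forall C : {set E}, C \subset B -> generator tau X C -> C = B.

Definition uniquely_generated (E : finType) (tau : {set E} -> {set E}) : Prop :=
  forall X : {set E}, exists! B : {set E}, basis tau X B.

(* Main.v *)
Require Import Defs.
From mathcomp Require Import all_boot.

Lemma exists_basis_sub (E : finType) (tau : {set E} -> {set E}) (X Y : {set E}) :
  tau Y = tau X -> exists B, basis tau X B /\ B \subset Y.
Proof.
move=> hY.
pose P := fun C : {set E} => (C \subset Y) && (tau C == tau X).
have PY : P Y by rewrite /P subxx hY eqxx.
case: (@arg_minnP _ Y P (fun C : {set E} => #|C|) PY) => C /andP [sCY /eqP hC] minC.
exists C; split => //; split => // C' sC' hC'.
apply/eqP; rewrite eqEcard sC' /=.
apply: minC; rewrite /P (subset_trans sC' sCY) /=; apply/eqP; exact: hC'.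
Qed.

Theorem mainTheorem6 (E : finType) (tau : {set E} -> {set E}) :
  uniquely_generated tau <->
  (forall X B Y : {set E}, basis tau X B -> tau Y = tau X -> B \subset Y).
Proof.
split.
- move=> UG X B Y hB hY.
  have [B' [hB' sB'Y]] := exists_basis_sub _ _ _ _ hY.
  have hBY : basis tau Y B.
    case: hB => gB mB; split; first by rewrite /generator gB hY.
    move=> C sC gC; apply: mB => //; by rewrite /generator gC hY.
  have hB'Y : basis tau Y B'.
    case: hB' => gB mB; split; first by rewrite /generator gB hY.
    move=> C sC gC; apply: mB => //; by rewrite /generator gC hY.
  case: (UG Y) => B0 [_ u].
  by rewrite -(u _ hBY) (u _ hB'Y).
- move=> H X.
  have [B [hB _]] := exists_basis_sub _ _ X X (erefl (tau X)).
  exists B; split => // B' hB'.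
  apply/eqP; rewrite eqEsubset.
  by rewrite (H _ _ _ hB (proj1 hB')) (H _ _ _ hB' (proj1 hB)).
Qed.
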